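(* Let $(f,g,h,X,U)$ be a balanced quintuple with $\operatorname{card}(X)=n\ge1$, and let $x_0\in X$ satisfy $h(x_0)\neq0$. Then there is a neighborhood of $x_0$ on which $f$ coincides with a polynomial of degree at most $n-2$ (where the zero function is regarded as a polynomial of degree $-1$; so for $n=1$ the conclusion is that $f$ vanishes near $x_0$).
   Context: Let $U\subset\mathbb{R}$ be open and $X\subset U$ a finite set with $\operatorname{card}(X)\ge1$. Let $f\colon U\to\mathbb{R}$ be continuous, $g\colon X\to\mathbb{R}$ injective, and $h\colon X\to\mathbb{R}$ arbitrary. The quintuple $(f,g,h,X,U)$ is called balanced if there is $\epsilon>0$ such that $$\sum_{x\in X} h(x)\,f\big(x+s+t\,g(x)\big)=0\quad\text{for all } s,t\in\mathbb{R} \text{ with } |s|,|t|<\epsilon.$$ *)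

(* Defs.v *)
From Stdlib Require Import Reals List.
From Stdlib Require Export Rtopology.
Import ListNotations.
Open Scope R_scope.

(* f continuous on U (f is given as a total function, only its values on U matter) *)
Definition continuous_on (U : R -> Prop) (f : R -> R) : Prop :=
  forall x, U x -> continuity_pt f x.

(* g injective on the finite set X (represented as a duplicate-free list) *)
Definition injective_on (X : list R) (g : R -> R) : Prop :=
  forall x y, In x X -> In y X -> g x = g y -> x = y.

Fixpoint sum_list (F : R -> R) (l : list R) : R :=
  match l with [] => 0 | a :: l' => F a + sum_list F l' end.

Definition balanced (f g h : R -> R) (X : list R) (U : R -> Prop) : Prop :=
  exists eps, 0 < eps /\
    forall s t, Rabs s < eps -> Rabs t < eps ->
      sum_list (fun x => h x * f (x + s + t * g x)) X = 0.

(* evaluation of the polynomial with coefficient list [c0; c1; ...] *)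
Fixpoint poly_eval (c : list R) (y : R) : R :=
  match c with [] => 0 | a :: c' => a + y * poly_eval c' y end.

(* Main.v *)
Require Import Defs.
From Stdlib Require Import Reals List Lra Lia FunctionalExtensionality FinFun ZArith.
Import ListNotations.
Open Scope R_scope.

Definition PolyFn (k : nat) (p : R -> R) : Prop :=
  exists c, (length c <= k)%nat /\ forall y, p y = poly_eval c y.

Lemma PolyFn_ext k p q : (forall y, p y = q y) -> PolyFn k p -> PolyFn k q.
Proof. intros H [c [Hl Hc]]. exists c; split; auto. intros y; rewrite <- H; auto. Qed.

Lemma PolyFn_mono k k' p : (k <= k')%nat -> PolyFn k p -> PolyFn k' p.
Proof. intros Hk [c [Hl Hc]]. exists c; split; [lia| auto]. Qed.

Lemma PolyFn_zero k : PolyFn k (fun _ => 0).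
Proof. exists []; split; simpl; [lia| auto]. Qed.

Lemma PolyFn_const a : PolyFn 1 (fun _ => a).
Proof. exists [a]; split; simpl; [lia | intros; ring]. Qed.

Fixpoint padd (c d : list R) : list R :=
  match c, d with
  | [], _ => d
  | _, [] => c
  | a :: c', b :: d' => (a + b) :: padd c' d'
  end.

Lemma padd_eval c d y : poly_eval (padd c d) y = poly_eval c y + poly_eval d y.
Proof. revert d; induction c as [|a c IH]; intros [|b d]; simpl; try ring. rewrite IH; ring. Qed.

Lemma padd_len c d k : (length c <= k)%nat -> (length d <= k)%nat -> (length (padd c d) <= k)%nat.
Proof. revert d k; induction c as [|a c IH]; intros [|b d] k H1 H2; simpl in *; auto.
  destruct k; [lia|]. specialize (IH d k ltac:(lia) ltac:(lia)). lia. Qed.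

Lemma PolyFn_add k p q : PolyFn k p -> PolyFn k q -> PolyFn k (fun y => p y + q y).
Proof. intros [c [Hc Ec]] [d [Hd Ed]]. exists (padd c d); split. apply padd_len; auto.
  intros y; rewrite padd_eval, Ec, Ed; auto. Qed.

Lemma scal_eval a c y : poly_eval (map (Rmult a) c) y = a * poly_eval c y.
Proof. induction c; simpl; [ring| rewrite IHc; ring]. Qed.

Lemma PolyFn_scal k a p : PolyFn k p -> PolyFn k (fun y => a * p y).
Proof. intros [c [Hc Ec]]. exists (map (Rmult a) c); split. rewrite length_map; auto.
  intros y; rewrite scal_eval, Ec; auto. Qed.

Lemma PolyFn_mulX k p : PolyFn k p -> PolyFn (S k) (fun y => y * p y).
Proof. intros [c [Hc Ec]]. exists (0 :: c); split; simpl. lia. intros y; rewrite Ec; ring. Qed.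

Lemma PolyFn_0 p : PolyFn 0 p -> forall y, p y = 0.
Proof. intros [c [Hc Ec]] y. destruct c; simpl in *; [rewrite Ec; auto| lia]. Qed.

Lemma PolyFn_S_inv k p : PolyFn (S k) p -> exists a r, PolyFn k r /\ forall y, p y = a + y * r y.
Proof. intros [c [Hc Ec]]. destruct c as [|a c].
  - exists 0, (fun _ => 0). split. apply PolyFn_zero. intros y; rewrite Ec; simpl; ring.
  - exists a, (poly_eval c). split. exists c; simpl in Hc; split; [lia|auto]. intros y; rewrite Ec; reflexivity. Qed.

Lemma PolyFn_sub k p q : PolyFn k p -> PolyFn k q -> PolyFn k (fun y => p y - q y).
Proof. intros Hp Hq. apply (PolyFn_ext k (fun y => p y + (-1) * q y)). intros; ring.
  apply PolyFn_add; auto. apply PolyFn_scal; auto. Qed.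

Lemma PolyFn_shift k : forall p d, PolyFn k p -> PolyFn k (fun y => p (y + d)).
Proof. induction k; intros p d Hp.
  - apply (PolyFn_ext 0 (fun _ => 0)). intros y; rewrite (PolyFn_0 p Hp); auto. apply PolyFn_zero.
  - destruct (PolyFn_S_inv _ _ Hp) as [a [r [Hr Er]]].
    apply (PolyFn_ext _ (fun y => (a + d * r (y + d)) + y * r (y + d))).
    intros y; rewrite Er; ring.
    apply PolyFn_add. apply PolyFn_add. apply (PolyFn_mono 1). lia. apply PolyFn_const.
    apply PolyFn_mono with k; [lia|]. apply PolyFn_scal. apply IHk; auto.
    apply PolyFn_mulX. apply IHk; auto. Qed.

Lemma PolyFn_diff k : forall p d, PolyFn (S k) p -> PolyFn k (fun y => p (y + d) - p y).
Proof. induction k; intros p d Hp.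
  - destruct (PolyFn_S_inv _ _ Hp) as [a [r [Hr Er]]].
    apply (PolyFn_ext 0 (fun _ => 0)); [|apply PolyFn_zero].
    intros y; rewrite !Er, !(PolyFn_0 r Hr); ring.
  - destruct (PolyFn_S_inv _ _ Hp) as [a [r [Hr Er]]].
    apply (PolyFn_ext _ (fun y => y * (r (y + d) - r y) + d * r (y + d))).
    intros y; rewrite !Er; ring.
    apply PolyFn_add. apply PolyFn_mulX. apply IHk; auto.
    apply PolyFn_scal. apply PolyFn_shift; auto. Qed.

Lemma PolyFn_root k : forall p b, PolyFn (S k) p -> p b = 0 ->
  exists q, PolyFn k q /\ forall y, p y = (y - b) * q y.
Proof. induction k; intros p b Hp Hb.
  - destruct (PolyFn_S_inv _ _ Hp) as [a [r [Hr Er]]].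
    exists (fun _ => 0); split; [apply PolyFn_zero|].
    intros y. rewrite Er in Hb. rewrite Er. rewrite (PolyFn_0 r Hr) in Hb |- *.
    ring_simplify in Hb. ring_simplify. auto.
  - destruct (PolyFn_S_inv _ _ Hp) as [a [r [Hr Er]]].
    destruct (IHk (fun y => r y - r b) b) as [s [Hs Es]].
    + apply PolyFn_sub; auto. apply (PolyFn_mono 1); [lia| apply PolyFn_const].
    + cbv beta; ring.
    + exists (fun y => r b + y * s y). split.
      * apply PolyFn_add. apply (PolyFn_mono 1); [lia| apply PolyFn_const]. apply PolyFn_mulX; auto.
      * intros y. assert (E := Es y). cbv beta in E. rewrite Er. rewrite Er in Hb.
        transitivity (a + y * r y - (a + b * r b)). lra.
        replace (r y) with (r y - r b + r b) by ring. rewrite E. ring.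
Qed.

Lemma PolyFn_roots : forall pts, NoDup pts -> forall p, PolyFn (length pts) p ->
  (forall x, In x pts -> p x = 0) -> forall y, p y = 0.
Proof. induction pts as [|b pts IH]; intros Hnd p Hp Hz y.
  - apply PolyFn_0; auto.
  - inversion Hnd as [|? ? Hnb Hnd']; subst. simpl in Hp.
    destruct (PolyFn_root _ p b Hp (Hz b (or_introl eq_refl))) as [q [Hq Eq]].
    rewrite Eq. rewrite (IH Hnd' q Hq). ring.
    intros x Hx. assert (Hxb : x - b <> 0). { intro. apply Hnb. replace b with x by lra. auto. }
    specialize (Hz x (or_intror Hx)). rewrite Eq in Hz.
    apply Rmult_integral in Hz. destruct Hz; [contradiction| auto].
Qed.

Lemma interp : forall pts, NoDup pts -> forall phi : R -> R, exists p, PolyFn (length pts) p /\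
  forall x, In x pts -> p x = phi x.
Proof. induction pts as [|b pts IH]; intros Hnd phi.
  - exists (fun _ => 0); split; [apply PolyFn_zero| intros x []].
  - inversion Hnd as [|? ? Hnb Hnd']; subst.
    destruct (IH Hnd' (fun x => (phi x - phi b) / (x - b))) as [q [Hq Eq]].
    exists (fun y => phi b + (y - b) * q y). split.
    + simpl. apply PolyFn_add. apply (PolyFn_mono 1); [lia| apply PolyFn_const].
      apply (PolyFn_ext _ (fun y => y * q y + (-b) * q y)). intros; ring.
      apply PolyFn_add. apply PolyFn_mulX; auto. apply PolyFn_mono with (length pts); [lia|]. apply PolyFn_scal; auto.
    + intros x [Hx|Hx]. subst; ring. rewrite Eq; auto.
      assert (x - b <> 0). { intro. apply Hnb. replace b with x by lra; auto. } field; auto.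
Qed.

Lemma poly_cont c y : continuity_pt (poly_eval c) y.
Proof. induction c as [|a c IH].
  - apply continuity_pt_const. intros u v; reflexivity.
  - assert (H1 : continuity_pt (fct_cte a) y) by (apply continuity_pt_const; intros u v; reflexivity).
    assert (H2 : continuity_pt (mult_fct id (poly_eval c)) y).
    { apply continuity_pt_mult; auto. apply derivable_continuous_pt. apply derivable_pt_id. }
    exact (continuity_pt_plus _ _ _ H1 H2).
Qed.

Lemma PolyFn_cont k p y : PolyFn k p -> continuity_pt p y.
Proof. intros [c [_ Ec]]. assert (p = poly_eval c) by (extensionality z; auto). subst; apply poly_cont. Qed.
Fixpoint DL (ds : list R) (F : R -> R) : R -> R :=
  match ds with [] => F | d :: ds' => DL ds' (fun y => F (y + d) - F y) end.
Fixpoint rsum (l : list R) : R := match l with [] => 0 | x :: l' => x + rsum l' end.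

Lemma DL_lin : forall ds F G a b y, DL ds (fun y => a * F y + b * G y) y = a * DL ds F y + b * DL ds G y.
Proof. induction ds as [|d ds IH]; intros F G a b y; simpl. auto.
  rewrite <- IH. apply (f_equal (fun H => DL ds H y)). extensionality z. ring. Qed.

Lemma PolyDL : forall ds p, PolyFn (length ds) p -> forall y, DL ds p y = 0.
Proof. induction ds as [|d ds IH]; intros p Hp y; simpl.
  - apply PolyFn_0; auto.
  - apply IH. apply PolyFn_diff; auto. Qed.

Definition Hyp (F : R -> R) (a b : R) (m : nat) : Prop :=
  forall ds y, length ds = m -> Forall (fun d => 0 < d) ds -> a <= y -> y + rsum ds <= b -> DL ds F y = 0.

Lemma Hyp_sub F p a b m : Hyp F a b m -> PolyFn m p -> Hyp (fun y => F y - p y) a b m.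
Proof. intros H Hp ds y Hl Hf Ha Hb.
  replace (DL ds (fun y => F y - p y) y) with (1 * DL ds F y + (-1) * DL ds p y).
  rewrite (H ds y Hl Hf Ha Hb), PolyDL. ring. subst m; auto.
  rewrite <- DL_lin. apply (f_equal (fun K => DL ds K y)). extensionality z; ring.
Qed.

Definition grid a e (k : nat) := a + INR k * e.

Lemma lemA : forall m phi a b d, 0 < d -> Hyp phi a b m ->
  (forall k, (k < m)%nat -> phi (grid a d k) = 0) ->
  forall k, grid a d k <= b -> phi (grid a d k) = 0.
Proof. unfold grid. induction m as [|m IH]; intros phi a b d Hd H Hz k Hk.
  - apply (H [] _ eq_refl); [constructor| | simpl; lra]. pose proof (pos_INR k). nra.
  - set (psi := fun y => phi (y + d) - phi y).
    assert (Hpsi : forall k, a + INR k * d <= b - d -> psi (a + INR k * d) = 0).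
    { apply (IH psi a (b - d) d Hd).
      - intros ds y Hl Hf Ha Hb. apply (H (d :: ds) y). simpl; lia. constructor; auto. auto. simpl; lra.
      - intros k0 Hk0. unfold psi; cbv beta.
        replace (a + INR k0 * d + d) with (a + INR (S k0) * d) by (rewrite S_INR; ring).
        rewrite (Hz (S k0)), (Hz k0) by lia; ring. }
    induction k as [|k IHk].
    + apply Hz; lia.
    + rewrite S_INR in *.
      assert (E := Hpsi k ltac:(lra)). unfold psi in E; cbv beta in E.
      replace (a + (INR k + 1) * d) with (a + INR k * d + d) by ring.
      rewrite IHk in E by lra. lra.
Qed.

Lemma floor_nat x : 0 <= x -> exists k : nat, INR k <= x < INR k + 1.
Proof. intros Hx. destruct (archimed x) as [H1 H2].
  assert (Hz : (0 < up x)%Z). { apply lt_IZR. lra. }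
  exists (Z.to_nat (up x - 1)). rewrite INR_IZR_INZ, Z2Nat.id by lia.
  rewrite minus_IZR. lra.
Qed.

Lemma INR_lt_pow2 n : INR n < 2 ^ n.
Proof. induction n. simpl; lra. rewrite S_INR. simpl.
  assert (1 <= 2^n). { apply pow_R1_Rle; lra. } lra. Qed.
Lemma coreC : forall m F a b, a < b -> (forall y, a < y < b -> continuity_pt F y) ->
  Hyp F a b m -> exists p, PolyFn m p /\ forall y, a < y < b -> F y = p y.
Proof.
  intros m F a b Hab Hc H.
  destruct m as [|m'].
  { exists (fun _ => 0). split. apply PolyFn_zero. intros y Hy.
    apply (H [] y eq_refl); [constructor| lra | simpl; lra]. }
  set (m := S m').
  set (d0 := (b - a) / INR m).
  assert (Hm : 0 < INR m) by (apply lt_0_INR; unfold m; lia).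
  assert (Hd0 : 0 < d0) by (unfold d0; apply Rdiv_lt_0_compat; lra).
  assert (Hd0m : INR m * d0 = b - a) by (unfold d0; field; lra).
  set (pts := fun e => map (grid a e) (seq 0 m)).
  assert (Hnd : forall e, 0 < e -> NoDup (pts e)).
  { intros e He. unfold pts. apply Injective_map_NoDup; [|apply seq_NoDup].
    intros k1 k2 E. unfold grid in E. apply INR_eq. apply (Rmult_eq_reg_r e); [lra|lra]. }
  assert (Hlen : forall e, length (pts e) = m) by (intros; unfold pts; rewrite length_map, length_seq; auto).
  assert (Hin : forall e k, (k < m)%nat -> In (grid a e k) (pts e)).
  { intros e k Hk. unfold pts. apply in_map. apply in_seq. lia. }
  assert (Hpow : forall j, 1 <= 2 ^ j) by (intros; apply pow_R1_Rle; lra).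
  assert (Hbnd : forall j k, (k <= m)%nat -> grid a (d0 / 2 ^ j) k <= b).
  { intros j k Hk. unfold grid. pose proof (Hpow j).
    assert (d0 / 2 ^ j <= d0). { unfold Rdiv. rewrite <- (Rmult_1_r d0) at 2.
      apply Rmult_le_compat_l; [lra|]. rewrite <- Rinv_1. apply Rinv_le_contravar; lra. }
    assert (0 < d0 / 2 ^ j) by (apply Rdiv_lt_0_compat; [lra| apply pow_lt; lra]).
    apply le_INR in Hk. pose proof (pos_INR k). nra. }
  destruct (interp (pts d0) (Hnd d0 Hd0) F) as [p [Hp Ep]].
  rewrite Hlen in Hp.
  exists p. split; auto.
  set (phi := fun y => F y - p y).
  assert (Hphi : Hyp phi a b m) by (apply Hyp_sub; auto).
  assert (Hclaim : forall j k, grid a (d0 / 2 ^ j) k <= b -> phi (grid a (d0 / 2 ^ j) k) = 0).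
  { induction j as [|j IHj].
    - intros k. replace (d0 / 2^0) with d0 by (simpl; field).
      apply (lemA m phi a b d0 Hd0 Hphi). intros k0 Hk0. unfold phi. rewrite Ep by (apply Hin; auto). ring.
    - set (e := d0 / 2 ^ j / 2).
      assert (He : 0 < e). { unfold e. apply Rdiv_lt_0_compat; [|lra]. apply Rdiv_lt_0_compat; auto. apply pow_lt; lra. }
      replace (d0 / 2 ^ S j) with e by (unfold e; simpl; field; apply pow_nonzero; lra).
      destruct (interp (pts e) (Hnd e He) phi) as [q [Hq Eq]]. rewrite Hlen in Hq.
      assert (Hpsi : forall k, grid a e k <= b -> phi (grid a e k) - q (grid a e k) = 0).
      { apply (lemA m (fun y => phi y - q y) a b e He). apply Hyp_sub; auto.
        intros k Hk. cbv beta. rewrite Eq by (apply Hin; auto). ring. }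
      assert (Hq0 : forall y, q y = 0).
      { assert (He2 : 0 < d0 / 2 ^ j) by (apply Rdiv_lt_0_compat; [lra| apply pow_lt; lra]).
        apply (PolyFn_roots (pts (d0 / 2 ^ j)) (Hnd _ He2)).
        - rewrite Hlen; auto.
        - intros x Hx. unfold pts in Hx. apply in_map_iff in Hx. destruct Hx as [k [<- Hk]]. apply in_seq in Hk.
          assert (Hkb : grid a (d0 / 2 ^ j) k <= b) by (apply Hbnd; lia).
          assert (E1 : grid a (d0 / 2 ^ j) k = grid a e (2 * k)).
          { unfold grid, e. rewrite mult_INR. simpl. field. apply pow_nonzero; lra. }
          pose proof (Hpsi (2*k)%nat ltac:(rewrite <- E1; auto)) as E2.
          rewrite <- E1 in E2. rewrite (IHj k Hkb) in E2. lra. }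
      intros k Hk. pose proof (Hpsi k Hk) as E. rewrite Hq0 in E. lra.
  }
  intros y Hy.
  assert (Hcy : continuity_pt phi y).
  { exact (continuity_pt_minus _ _ _ (Hc y Hy) (PolyFn_cont _ _ y Hp)). }
  destruct (Req_dec (phi y) 0) as [Hz|Hnz]. { unfold phi in Hz; lra. }
  exfalso.
  unfold continuity_pt, continue_in, limit1_in, limit_in in Hcy.
  destruct (Hcy (Rabs (phi y)) (Rabs_pos_lt _ Hnz)) as [alp [Halp Hal]].
  simpl in Hal. unfold R_dist, D_x, no_cond in Hal.
  destruct (floor_nat (d0 / alp)) as [n [_ Hn]].
  { apply Rlt_le, Rdiv_lt_0_compat; lra. }
  set (P := 2 ^ S n). assert (HP : 0 < P) by (apply pow_lt; lra).
  pose proof (INR_lt_pow2 (S n)) as HnP. fold P in HnP. rewrite S_INR in HnP.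
  set (e := d0 / P).
  assert (HeP : e * P = d0) by (unfold e; field; lra).
  assert (Hdd : d0 = (d0 / alp) * alp) by (field; lra).
  assert (He : 0 < e) by (unfold e; apply Rdiv_lt_0_compat; lra).
  assert (Hea : e < alp) by nra.
  destruct (floor_nat ((y - a) / e)) as [k [Hk1 Hk2]].
  { apply Rlt_le, Rdiv_lt_0_compat; lra. }
  assert (Hye : (y - a) / e * e = y - a) by (field; lra).
  assert (Hz1 : grid a e k <= y) by (unfold grid; nra).
  assert (Hz2 : y - grid a e k < e) by (unfold grid; nra).
  assert (Hz : phi (grid a e k) = 0).
  { unfold e, P. apply Hclaim. fold P; fold e. lra. }
  destruct (Req_dec (grid a e k) y) as [Heq|Hne].
  { rewrite Heq in Hz. contradiction. }
  specialize (Hal (grid a e k)). rewrite Hz in Hal.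
  assert (Rabs (0 - phi y) < Rabs (phi y)).
  { apply Hal. split. split; auto. rewrite Rabs_left; lra. }
  rewrite Rminus_0_l, Rabs_Ropp in H0. lra.
Qed.
Lemma sum_list_ext F G l : (forall x, F x = G x) -> sum_list F l = sum_list G l.
Proof. intros H; induction l; simpl; auto. rewrite H, IHl; auto. Qed.
Lemma sum_list_minus F G l : sum_list (fun x => F x - G x) l = sum_list F l - sum_list G l.
Proof. induction l; simpl. ring. rewrite IHl; ring. Qed.
Lemma sum_list_app F l1 l2 : sum_list F (l1 ++ l2) = sum_list F l1 + sum_list F l2.
Proof. induction l1; simpl. ring. rewrite IHl1; ring. Qed.

Lemma ridge (g : R -> R) (g0 C : R) : forall L (phi0 : R -> R) (phi : R -> R -> R) eps,
  (forall j, In j L -> g j <> g0) ->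
  (forall j, In j L -> (1 + Rabs (g j)) / Rabs (g0 - g j) <= C) ->
  (forall s t, Rabs s < eps -> Rabs t < eps ->
      phi0 (s + t * g0) + sum_list (fun j => phi j (s + t * g j)) L = 0) ->
  forall ds u, length ds = length L -> Rabs u + C * rsum (map Rabs ds) < eps -> DL ds phi0 u = 0.
Proof.
  induction L as [|j L IH]; intros phi0 phi eps Hg HC Heq ds u Hl Hu.
  - destruct ds; [|discriminate]. simpl in *. specialize (Heq u 0).
    rewrite Rmult_0_l, Rplus_0_r, Rplus_0_r in Heq. pose proof (Rabs_pos u).
    apply Heq; [lra| rewrite Rabs_R0; lra].
  - destruct ds as [|d ds]; [discriminate|]. simpl in Hl, Hu. injection Hl as Hl.
    assert (Hgj : g0 - g j <> 0) by (intro; apply (Hg j (or_introl eq_refl)); lra).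
    assert (Habs : Rabs (g0 - g j) > 0) by (apply Rabs_pos_lt; auto).
    pose proof (HC j (or_introl eq_refl)) as HCj.
    assert (HC0 : 0 < C).
    { eapply Rlt_le_trans; [|apply HCj]. apply Rdiv_lt_0_compat; [|lra]. pose proof (Rabs_pos (g j)); lra. }
    set (tau := d / (g0 - g j)).
    assert (Htau : Rabs tau * (1 + Rabs (g j)) <= C * Rabs d).
    { unfold tau, Rdiv. rewrite Rabs_mult, Rabs_inv.
      replace (Rabs d * / Rabs (g0 - g j) * (1 + Rabs (g j))) with (Rabs d * ((1 + Rabs (g j)) / Rabs (g0 - g j))) by (field; lra).
      rewrite (Rmult_comm C). apply Rmult_le_compat_l; [apply Rabs_pos| auto]. }
    change (DL ds (fun y => phi0 (y + d) - phi0 y) u = 0).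
    pose proof (Rabs_pos d). pose proof (Rabs_pos tau). pose proof (Rabs_pos (g j)).
    apply (IH (fun y => phi0 (y + d) - phi0 y) (fun i v => phi i (v + tau * (g i - g j)) - phi i v) (eps - C * Rabs d)).
    + intros; apply Hg; right; auto.
    + intros; apply HC; right; auto.
    + intros s t Hs Ht.
      assert (Hs' : Rabs (s - tau * g j) < eps).
      { assert (Rabs (s - tau * g j) <= Rabs s + Rabs tau * Rabs (g j)).
        { unfold Rminus. eapply Rle_trans; [apply Rabs_triang| rewrite Rabs_Ropp, Rabs_mult; lra]. }
        nra. }
      assert (Ht' : Rabs (t + tau) < eps).
      { pose proof (Rabs_triang t tau). nra. }
      pose proof (Heq _ _ Hs' Ht') as E1. pose proof (Heq s t ltac:(nra) ltac:(nra)) as E2.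
      simpl in E1, E2. cbv beta.
      assert (EA : sum_list (fun i => phi i (s + t * g i + tau * (g i - g j))) L
                   = sum_list (fun i => phi i (s - tau * g j + (t + tau) * g i)) L).
      { apply sum_list_ext. intros i. f_equal. ring. }
      assert (Ej : phi j (s - tau * g j + (t + tau) * g j) = phi j (s + t * g j)) by (f_equal; ring).
      assert (E0 : phi0 (s + t * g0 + d) = phi0 (s - tau * g j + (t + tau) * g0))
        by (f_equal; unfold tau; field; auto).
      assert (EM : sum_list (fun i => phi i (s + t * g i + tau * (g i - g j)) - phi i (s + t * g i)) L
                   = sum_list (fun i => phi i (s + t * g i + tau * (g i - g j))) L - sum_list (fun i => phi i (s + t * g i)) L)
        by (apply sum_list_minus).
      rewrite EM, EA, E0. lra.
    + auto.
    + nra.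
Qed.

Lemma exC (G : R -> R) : forall L : list R, exists C, 0 < C /\ forall j, In j L -> G j <= C.
Proof. induction L as [|j L [C [HC H]]].
  - exists 1; split; [lra| intros _ []].
  - exists (Rmax (G j) C). split. eapply Rlt_le_trans; [apply HC| apply Rmax_r].
    intros i [<-|Hi]. apply Rmax_l. eapply Rle_trans; [apply H; auto| apply Rmax_r].
Qed.

Lemma DL_scal : forall ds F a y, DL ds (fun y => a * F y) y = a * DL ds F y.
Proof. induction ds as [|d ds IH]; intros F a y; simpl. auto.
  rewrite <- IH. apply (f_equal (fun H => DL ds H y)). extensionality z. ring. Qed.

Lemma rsum_abs ds : Forall (fun d => 0 < d) ds -> rsum (map Rabs ds) = rsum ds /\ 0 <= rsum ds.
Proof. induction 1; simpl. lra. rewrite Rabs_right by lra. destruct IHForall; split; lra. Qed.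

Theorem mainTheorem4 (U : R -> Prop) (X : list R) (f g h : R -> R) (x0 : R) :
  open_set U ->
  NoDup X ->
  (1 <= length X)%nat ->
  (forall x, In x X -> U x) ->
  continuous_on U f ->
  injective_on X g ->
  balanced f g h X U ->
  In x0 X -> h x0 <> 0 ->
  exists (delta : R) (c : list R),
    0 < delta /\ (length c <= length X - 1)%nat /\
    forall y, Rabs (y - x0) < delta -> U y /\ f y = poly_eval c y.
Proof.
  intros HU Hnd Hlen HXU Hf Hg [eps [Heps Hbal]] Hx0 Hh0.
  destruct (in_split _ _ Hx0) as [l1 [l2 HX]]. subst X.
  set (L := l1 ++ l2).
  assert (HnL : ~ In x0 L) by (apply NoDup_remove_2; auto).
  assert (HinX : forall j, In j L -> In j (l1 ++ x0 :: l2)).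
  { intros j Hj. apply in_app_or in Hj. apply in_or_app. destruct Hj; [left|right; right]; auto. }
  assert (Hgj : forall j, In j L -> g j <> g x0).
  { intros j Hj E. apply HnL. rewrite <- (Hg j x0 (HinX j Hj) Hx0 E). auto. }
  destruct (exC (fun j => (1 + Rabs (g j)) / Rabs (g x0 - g j)) L) as [C [HC0 HC]].
  assert (Hr : forall ds u, length ds = length L -> Rabs u + C * rsum (map Rabs ds) < eps ->
                DL ds (fun v => f (x0 + v)) u = 0).
  { intros ds u Hl Hu.
    assert (E := ridge g (g x0) C L (fun v => h x0 * f (x0 + v)) (fun j v => h j * f (j + v)) eps Hgj HC).
    assert (DL ds (fun v => h x0 * f (x0 + v)) u = 0).
    { apply E; auto. intros s t Hs Ht. specialize (Hbal s t Hs Ht).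
      rewrite sum_list_app in Hbal. simpl in Hbal. unfold L; rewrite sum_list_app. cbv beta.
      assert (E1 : forall l, sum_list (fun j => h j * f (j + (s + t * g j))) l = sum_list (fun x => h x * f (x + s + t * g x)) l).
      { intros l; apply sum_list_ext; intros; rewrite Rplus_assoc; auto. }
      rewrite !E1. replace (x0 + (s + t * g x0)) with (x0 + s + t * g x0) by ring. lra. }
    rewrite DL_scal in H. apply Rmult_integral in H. destruct H; [contradiction| auto]. }
  destruct (HU x0 (HXU x0 Hx0)) as [del Hdel].
  unfold included, disc in Hdel.
  pose proof (cond_pos del) as Hdp.
  set (r := Rmin (del / 2) (eps / (2 * (1 + 2 * C)))).
  assert (Hr1 : r <= del / 2) by apply Rmin_l.
  assert (Hr2 : r <= eps / (2 * (1 + 2 * C))) by apply Rmin_r.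
  assert (Hrp : 0 < r) by (apply Rmin_pos; [lra| apply Rdiv_lt_0_compat; lra]).
  assert (Hr3 : r * (1 + 2 * C) < eps).
  { assert (eps / (2 * (1 + 2 * C)) * (1 + 2 * C) = eps / 2) by (field; lra). nra. }
  set (F := fun v => f (x0 + v)).
  assert (HH : Hyp F (-r) r (length L)).
  { intros ds y Hl Hpos Ha Hb. apply Hr; auto.
    destruct (rsum_abs ds Hpos) as [E1 E2]. rewrite E1.
    assert (Rabs y <= r) by (apply Rabs_le; lra). nra. }
  assert (Hcont : forall v, -r < v < r -> continuity_pt F v).
  { intros v Hv. unfold F.
    assert (H1 : continuity_pt (fun v => x0 + v) v).
    { apply derivable_continuous_pt. apply derivable_pt_plus. apply derivable_pt_const. apply derivable_pt_id. }
    assert (HU' : U (x0 + v)) by (apply Hdel; replace (x0 + v - x0) with v by ring; apply Rabs_def1; lra).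
    exact (continuity_pt_comp _ f v H1 (Hf _ HU')). }
  destruct (coreC (length L) F (-r) r ltac:(lra) Hcont HH) as [p [Hp Ep]].
  destruct (PolyFn_shift _ p (- x0) Hp) as [c [Hc Ec]].
  exists r, c. split; auto. split.
  { unfold L in Hc. rewrite length_app in Hc. rewrite length_app. simpl. lia. }
  intros y Hy. split.
  { apply Hdel. lra. }
  rewrite <- Ec. replace y with (x0 + (y - x0)) at 1 by ring.
  change (F (y - x0) = p (y + - x0)). apply Ep. apply Rabs_def2 in Hy. lra.
Qed.
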